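(* Every atomic egalitarian rewrite system $\mathcal{R}=(S,\le,\Sigma,E,M,R)$ can be transformed into a readable one $\mathcal{R}'=(S,\le,\Sigma,E,M,R')$ (where only the set of rules has changed) that induces the same half-rewrite relation.
   Context: An atomic egalitarian rewrite system is a tuple $\mathcal{R}=(S,\le,\Sigma,E,M,R)$ where: $(S,\le,\Sigma)$ is a (kind-completed) order-sorted signature; there are distinguished sorts $\texttt{State}$ and $\texttt{Trans}$ with a common supersort $\texttt{Stage}$, and the system is topmost (no term of sort $\texttt{Stage}$ contains a proper subterm of sort $\texttt{Stage}$); $E$ is a set of possibly conditional equations ``$t=t' \text{ if } C$''; $M$ is a set of possibly conditional membership axioms ``$t:s \text{ if } C$''; and $R$ is a set of possibly conditional rewrite rules ``$t \xrightarrow{\ell} t' \text{ if } C$'' with $t,t'\in T_\Sigma(X)_{\texttt{State}}$ and $\ell\in T_\Sigma(X)_{\texttt{Trans}}$ (a transition term replacing the usual rule label). In all cases the condition $C$ is a conjunction of equational conditions $t_i=t'_i$ and membership conditions $t_j:s_j$ (no rewrite conditions). Half-rewrite relation: for ground terms $u,v$, $u\rightarrow v$ holds iff either there are a rule ``$t \xrightarrow{\ell} t' \text{ if } C$'' in $R$ and a substitution $\theta_1:\mathrm{vars}(\ell,t,t',C)\to T_\Sigma$ with $\mathcal{R}\models C\theta_1$, $u=_E t\theta_1$ and $v=_E \ell\theta_1$; or there are such a rule and a substitution $\theta_2$ with $\mathcal{R}\models C\theta_2$, $u=_E\ell\theta_2$ and $v=_E t'\theta_2$ (where $=_E$ is equality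 modulo the equations $E$). Readability: a rule is readable iff for every two consecutive half rewrites $u\rightarrow v$ and $v\rightarrow w$ performed using that rule with substitutions $\theta_1$ and $\theta_2$ respectively, the same two half rewrites can be obtained by using the same substitution for both; an atomic egalitarian rewrite system is readable if all its rules are. *)

(* Defs.v *)
From Stdlib Require Import List.
Import ListNotations.
Set Implicit Arguments.

Record osig := OSig {
  sort : Type;
  sle : sort -> sort -> Prop;
  opsym : Type;
  decl : opsym -> list sort -> sort -> Prop;
  State : sort;
  Trans : sort;
  Stage : sort
}.

Section Rewriting.
Variable Sg : osig.

Inductive term (V : Type) : Type :=
| Var (x : V)
| App (f : opsym Sg) (args : list (term V)).
Arguments Var {V} x.
Arguments App {V} f args.

(* Variables: countably many of each sort; a variable carries its sort. *)
Definition var : Type := (nat * sort Sg)%type.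
Definition oterm := term var.
Definition gterm := term Empty_set.

Fixpoint vars (t : oterm) : list var :=
  match t with
  | Var x => [x]
  | App _ l => flat_map vars l
  end.

Fixpoint subst (th : var -> gterm) (t : oterm) : gterm :=
  match t with
  | Var x => th x
  | App f l => App f (map (subst th) l)
  end.

Fixpoint gembed (u : gterm) : oterm :=
  match u with
  | Var x => match x with end
  | App f l => App f (map gembed l)
  end.

Inductive atom :=
| AEq (a b : oterm)
| AMem (a : oterm) (s : sort Sg).

Definition cond := list atom.

Definition atom_vars (c : atom) : list var :=
  match c with
  | AEq a b => vars a ++ vars b
  | AMem a _ => vars a
  end.
Definition cond_vars (C : cond) : list var := flat_map atom_vars C.

Record eqn := Eqn { e_lhs : oterm; e_rhs : oterm; e_cond : cond }.
Record memb := Memb { m_term : oterm; m_sort : sort Sg; m_cond : cond }.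
Record rule := Rule { r_lhs : oterm; r_label : oterm; r_rhs : oterm; r_cond : cond }.

Definition eqn_vars (e : eqn) := vars (e_lhs e) ++ vars (e_rhs e) ++ cond_vars (e_cond e).
Definition memb_vars (m : memb) := vars (m_term m) ++ cond_vars (m_cond m).
Definition rule_vars (r : rule) :=
  vars (r_label r) ++ vars (r_lhs r) ++ vars (r_rhs r) ++ cond_vars (r_cond r).

Inductive styped : oterm -> sort Sg -> Prop :=
| st_var (x : var) s : sle Sg (snd x) s -> styped (Var x) s
| st_app f l ss s s' : decl Sg f ss s -> Forall2 styped l ss -> sle Sg s s' ->
    styped (App f l) s'.

Inductive psubterm : oterm -> oterm -> Prop :=
| ps_arg f l v : In v l -> psubterm v (App f l)
| ps_trans f l v w : In w l -> psubterm v w -> psubterm v (App f l).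

Definition partial_order : Prop :=
  (forall s, sle Sg s s) /\
  (forall s1 s2 s3, sle Sg s1 s2 -> sle Sg s2 s3 -> sle Sg s1 s3) /\
  (forall s1 s2, sle Sg s1 s2 -> sle Sg s2 s1 -> s1 = s2).

Inductive connected : sort Sg -> sort Sg -> Prop :=
| conn_le s s' : sle Sg s s' -> connected s s'
| conn_sym s s' : connected s s' -> connected s' s
| conn_trans s1 s2 s3 : connected s1 s2 -> connected s2 s3 -> connected s1 s3.

Definition is_kind (k : sort Sg) : Prop := forall s, sle Sg k s -> s = k.

Definition kind_completed : Prop :=
  (forall s, exists k, is_kind k /\ sle Sg s k /\
     forall s', connected s s' -> sle Sg s' k) /\
  (forall f ss s, decl Sg f ss s ->
     exists ks k, decl Sg f ks k /\ Forall is_kind ks /\ is_kind k /\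
       Forall2 (sle Sg) ss ks /\ sle Sg s k).

Definition topmost : Prop :=
  forall t u, styped t (Stage Sg) -> psubterm u t -> ~ styped u (Stage Sg).

Definition rule_wf (r : rule) : Prop :=
  styped (r_lhs r) (State Sg) /\ styped (r_rhs r) (State Sg) /\
  styped (r_label r) (Trans Sg).

Definition atomic_egalitarian (E : eqn -> Prop) (M : memb -> Prop)
    (R : rule -> Prop) : Prop :=
  partial_order /\ kind_completed /\
  sle Sg (State Sg) (Stage Sg) /\ sle Sg (Trans Sg) (Stage Sg) /\
  topmost /\ (forall r, R r -> rule_wf r).

Section Deduction.
Variable E : eqn -> Prop.
Variable M : memb -> Prop.

(* Membership equational logic deduction on ground terms:
   deq u v  means  E u M |- u = v   (i.e. u =_E v),
   dmem u s means  E u M |- u : s. *)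
Inductive deq : gterm -> gterm -> Prop :=
| deq_refl u : deq u u
| deq_sym u v : deq u v -> deq v u
| deq_trans u v w : deq u v -> deq v w -> deq u w
| deq_cong f l1 l2 : Forall2 deq l1 l2 -> deq (App f l1) (App f l2)
| deq_ax (e : eqn) (th : var -> gterm) :
    E e ->
    (forall x, In x (eqn_vars e) -> dmem (th x) (snd x)) ->
    (forall a b, In (AEq a b) (e_cond e) -> deq (subst th a) (subst th b)) ->
    (forall a s, In (AMem a s) (e_cond e) -> dmem (subst th a) s) ->
    deq (subst th (e_lhs e)) (subst th (e_rhs e))
with dmem : gterm -> sort Sg -> Prop :=
| dm_op f l ss s : decl Sg f ss s -> Forall2 dmem l ss -> dmem (App f l) s
| dm_sub u s s' : dmem u s -> sle Sg s s' -> dmem u s'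
| dm_eq u v s : deq u v -> dmem u s -> dmem v s
| dm_ax (m : memb) (th : var -> gterm) :
    M m ->
    (forall x, In x (memb_vars m) -> dmem (th x) (snd x)) ->
    (forall a b, In (AEq a b) (m_cond m) -> deq (subst th a) (subst th b)) ->
    (forall a s, In (AMem a s) (m_cond m) -> dmem (subst th a) s) ->
    dmem (subst th (m_term m)) (m_sort m).

(* R |= C theta  (satisfaction in the initial model of (Sigma, E u M)). *)
Definition csat (th : var -> gterm) (C : cond) : Prop :=
  (forall a b, In (AEq a b) C -> deq (subst th a) (subst th b)) /\
  (forall a s, In (AMem a s) C -> dmem (subst th a) s).

Definition adm (th : var -> gterm) (xs : list var) : Prop :=
  forall x, In x xs -> dmem (th x) (snd x).

Definition hstep (r : rule) (th : var -> gterm) (u v : gterm) : Prop :=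
  adm th (rule_vars r) /\ csat th (r_cond r) /\
  ((deq u (subst th (r_lhs r)) /\ deq v (subst th (r_label r))) \/
   (deq u (subst th (r_label r)) /\ deq v (subst th (r_rhs r)))).

Definition hrw (R : rule -> Prop) (u v : gterm) : Prop :=
  exists r th, R r /\ hstep r th u v.

Definition readable_rule (r : rule) : Prop :=
  forall u v w th1 th2, hstep r th1 u v -> hstep r th2 v w ->
    exists th, hstep r th u v /\ hstep r th v w.

Definition readable (R : rule -> Prop) : Prop :=
  forall r, R r -> readable_rule r.

End Deduction.
End Rewriting.

(* Main.v *)
Require Import Defs.
From Stdlib Require Import List.
Import ListNotations.

Section P.
Variable Sg : osig.

Fixpoint term_ind' V (P : term Sg V -> Prop) (HV : forall x, P (Var Sg x))
  (HA : forall f l, Forall P l -> P (App f l)) (t : term Sg V) : P t :=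
  match t with
  | Var _ x => HV x
  | App f l => HA f l ((fix go (l : list (term Sg V)) : Forall P l :=
       match l with
       | [] => Forall_nil _
       | a :: l' => Forall_cons _ (term_ind' _ P HV HA a) (go l')
       end) l)
  end.

Lemma subst_gembed (th : var Sg -> gterm Sg) (g : gterm Sg) :
  subst th (gembed g) = g.
Proof.
  revert g; apply term_ind'; [intros x; destruct x|intros f l IH].
  simpl. f_equal. rewrite map_map. induction IH; simpl; f_equal; auto.
Qed.

Lemma vars_gembed (g : gterm Sg) : vars (gembed g) = [].
Proof.
  revert g; apply term_ind'; [intros x; destruct x|intros f l IH].
  simpl. induction IH; simpl; auto. rewrite H, IHIH. reflexivity.
Qed.

Lemma subst_cong (E : eqn Sg -> Prop) (M : memb Sg -> Prop) (th1 th2 : var Sg -> gterm Sg) (t : oterm Sg) :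
  (forall x, In x (vars t) -> deq E M (th1 x) (th2 x)) ->
  deq E M (subst th1 t) (subst th2 t).
Proof.
  revert t; apply (term_ind' _ (fun t => (forall x, In x (vars t) -> deq E M (th1 x) (th2 x)) -> deq E M (subst th1 t) (subst th2 t))); [intros x H|intros f l IH H].
  - apply H. simpl. auto.
  - simpl. apply deq_cong. simpl in H. induction IH; simpl; constructor.
    + apply H0. intros y Hy. apply H. apply in_or_app. auto.
    + apply IHIH. intros y Hy. apply H. apply in_or_app. auto.
Qed.

Definition fixr (r : rule Sg) (th : var Sg -> gterm Sg) : rule Sg :=
  Rule (r_lhs r) (r_label r) (r_rhs r)
    (r_cond r ++ map (fun x => AEq (Var Sg x) (gembed (th x))) (rule_vars r)).

Lemma fixr_vars r th x : In x (rule_vars (fixr r th)) <-> In x (rule_vars r).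
Proof.
  unfold rule_vars, fixr, cond_vars; simpl.
  rewrite flat_map_app.
  repeat rewrite in_app_iff.
  split.
  - intros [H|[H|[H|[H|H]]]]; auto 10.
    apply in_flat_map in H as [a [Ha Hx]].
    apply in_map_iff in Ha as [y [<- Hy]].
    simpl in Hx. rewrite vars_gembed in Hx. destruct Hx as [<-|[]].
    unfold rule_vars, cond_vars in Hy. repeat rewrite in_app_iff in Hy. tauto.
  - intros [H|[H|[H|H]]]; auto 10.
Qed.

Lemma sub_cond (E : eqn Sg -> Prop) (M : memb Sg -> Prop) th (C C' : cond Sg) : csat E M th (C ++ C') -> csat E M th C.
Proof.
  intros [H1 H2]; split; intros; [apply H1|apply H2]; apply in_or_app; auto.
Qed.

Lemma fixr_eqs (E : eqn Sg -> Prop) (M : memb Sg -> Prop) r th0 th x : csat E M th (r_cond (fixr r th0)) ->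
  In x (rule_vars r) -> deq E M (th x) (th0 x).
Proof.
  intros [H1 _] Hx.
  specialize (H1 (Var Sg x) (gembed (th0 x))).
  rewrite subst_gembed in H1. apply H1. simpl. apply in_or_app. right.
  apply in_map_iff. eauto.
Qed.

End P.
Arguments fixr {Sg}.
Arguments fixr_eqs {Sg E M r th0 th x}.
Arguments fixr_vars {Sg r th x}.
Arguments sub_cond {Sg E M th C C'}.

Theorem proposition3 (Sg : osig) (E : eqn Sg -> Prop) (M : memb Sg -> Prop)
    (R : rule Sg -> Prop) :
  atomic_egalitarian E M R ->
  exists R' : rule Sg -> Prop,
    atomic_egalitarian E M R' /\ readable E M R' /\
    (forall u v, hrw E M R u v <-> hrw E M R' u v).
Proof.
  intros [H1 [H2 [H3 [H4 [H5 H6]]]]].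
  exists (fun r' => exists r th, R r /\ r' = fixr r th).
  split; [|split].
  - refine (conj H1 (conj H2 (conj H3 (conj H4 (conj H5 _))))). intros r' [r [th [Hr ->]]]. apply H6 in Hr.
    exact Hr.
  - intros r' [r [th0 [Hr ->]]] u v w th1 th2 [A1 [C1 D1]] [A2 [C2 D2]].
    exists th1. split; [split; auto|split; [|split]]; auto.
    assert (Hc : forall t, (forall x, In x (vars t) -> In x (rule_vars r)) ->
      deq E M (subst th2 t) (subst th1 t)).
    { intros t Ht. apply subst_cong. intros x Hx.
      eapply deq_trans. apply (fixr_eqs C2). auto.
      apply deq_sym. apply (fixr_eqs C1). auto. }
    unfold rule_vars in Hc.
    simpl in D2 |- *.
    destruct D2 as [[Da Db]|[Da Db]]; [left|right]; split;
      (eapply deq_trans; [eassumption|apply Hc; intros; repeat rewrite in_app_iff; tauto]).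
  - intros u v; split.
    + intros [r [th [Hr [A [C D]]]]].
      exists (fixr r th), th. split; [eauto|].
      split; [|split].
      * intros x Hx. apply A. exact (proj1 (@fixr_vars _ r th x) Hx).
      * destruct C as [C1 C2]. split; intros a b Hin; simpl in Hin;
          apply in_app_iff in Hin as [Hin|Hin]; auto.
        -- apply in_map_iff in Hin as [y [Hy _]]. injection Hy as <- <-.
           simpl. rewrite subst_gembed. apply deq_refl.
        -- apply in_map_iff in Hin as [y [Hy _]]. discriminate.
      * exact D.
    + intros [r' [th [[r [th0 [Hr ->]]] [A [C D]]]]].
      exists r, th. split; auto. split; [|split].
      * intros x Hx. apply A. exact (proj2 (@fixr_vars _ r th0 x) Hx).
      * eapply sub_cond. exact C.
      * exact D.
Qed.
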